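(* Let $\Lambda=(0,\infty)$ and let $\chi\colon\Lambda\to\mathbb{R}^3_+$ be continuous, bounded, with $\operatorname{supp}\chi=[0,1]$ and $\chi(\lambda)\ne\mathbf{0}$ on $(0,1)$; let $\eta=\chi/\langle\mathbf{1},\chi\rangle$ on $(0,1)$, extended continuously to $[0,1]$. Let $\mathcal{P}$, $A$, $\mathcal{T}$ be as in the context. Let $\mu$ be a finite nonnegative Borel measure on $\Lambda$ with $\tilde\mu=\langle\chi(\cdot),\mathbf{1}\rangle\mu$ satisfying $\tilde\mu(\Lambda)=1$ and $\operatorname{supp}\tilde\mu=[0,1]$. Assume the spectral locus is strictly convex. Let $f,g$ be $\tilde\mu$-integrable functions with $\int f\,\mathrm{d}\tilde\mu=\int g\,\mathrm{d}\tilde\mu=1$ such that $f-g$ changes sign twice on $[0,1]$. Then $\mathbf{c}_\mu(f)\neq\mathbf{c}_\mu(g)$, where $\mathbf{c}_\mu(f)=\int_{[0,1]}f\eta\,\mathrm{d}\tilde\mu$.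
   Context: $\mathcal{P}=\{\int\chi\,\mathrm{d}\nu:\nu$ finite nonnegative Borel measure on $\Lambda\}$ is assumed to have nonempty interior; $A=\{\mathbf{x}\in\mathbb{R}^3:\langle\mathbf{x},\mathbf{1}\rangle=1\}$; $\mathcal{T}=\mathcal{P}\cap A$, regarded as a subset of $A$ with its relative topology. Fix a direction and orientation in $A$; $\angle(\mathbf{c}',\mathbf{c})$ is the angle from $\mathbf{c}$ to $\mathbf{c}'$. A cyclic interval in $[0,1]$: $[a,b]_{\mathbb{T}}=[a,b]$ if $a\le b$, $=[a,1]\cup[0,b]$ if $a>b$, and analogously for open/half-open ones. The spectral locus $\eta([0,1])$ is convex if $\eta([0,1])\subset\partial\mathcal{T}$ and for every $\mathbf{c}\in\operatorname{int}\mathcal{T}$ a continuous version of $\lambda\mapsto\angle(\eta(\lambda),\mathbf{c})$ is monotone on $[0,1]$ with $|\angle(\eta(0),\mathbf{c})-\angle(\eta(1),\mathbf{c})|\le2\pi$; it is strictly convex if moreover $\eta(\lambda)\notin[\eta(a),\eta(b)]$ for all pairwise distinct $a,b,\lambda\in[0,1]$ ($[\mathbf{x},\mathbf{y}]$ the closed segment). A $\tilde\mu$-measurable function $u$ on $[0,1]$ changes sign twice on $[0,1]$ if $\tilde\mu(\{u>0\})>0$, $\tilde\mu(\{u<0\})>0$, and there is a cyclic interval $I\subset[0,1]$ such that both $I$ and $[0,1]\setminus I$ have nonempty interior, $u\ge0$ on $I$ and $u\le0$ outside $I$. *)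

(* Defs.v *)
From HB Require Import structures.
From mathcomp Require Import all_boot all_order all_algebra.
From mathcomp Require Import all_classical all_reals all_analysis.
Set Implicit Arguments. Unset Strict Implicit. Unset Printing Implicit Defensive.
Import Order.TTheory GRing.Theory Num.Theory.
Import numFieldNormedType.Exports.
Local Open Scope classical_set_scope.
Local Open Scope ring_scope.

Section defs.
Variable R : realType.

Definition vec3 := 'I_3 -> R.

Definition Lam : set R := [set t | 0 < t].

Definition sum3 (x : vec3) : R := \sum_(i < 3) x i.

Definition inA (x : vec3) : Prop := sum3 x = 1.

(* P = { \int chi dnu : nu finite nonnegative Borel measure on Lambda } ;
   a measure on Lambda is represented as a finite measure on R with no mass
   outside Lambda *)
Definition inP (chi : R -> vec3) (x : vec3) : Prop :=
  exists nu : {finite_measure set R -> \bar R},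
    nu (~` Lam) = 0%E /\
    forall i : 'I_3, (x i)%:E = (\int[nu]_(t in Lam) (chi t i)%:E)%E.

Definition inT (chi : R -> vec3) (x : vec3) : Prop := inP chi x /\ inA x.

Definition near3 (x y : vec3) (e : R) : Prop := forall i, `|y i - x i| < e.

Definition relintA (S : vec3 -> Prop) (x : vec3) : Prop :=
  S x /\ exists2 e : R, 0 < e & forall y, inA y -> near3 x y e -> S y.
Definition clos3 (S : vec3 -> Prop) (x : vec3) : Prop :=
  forall e : R, 0 < e -> exists y, S y /\ near3 x y e.
Definition bdA (S : vec3 -> Prop) (x : vec3) : Prop :=
  clos3 S x /\ ~ relintA S x.

Definition has_interior3 (S : vec3 -> Prop) : Prop :=
  exists x, exists2 e : R, 0 < e & forall y, near3 x y e -> S y.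

(* fixed orthonormal coordinates (direction and orientation) on the direction
   plane {w | <w,1> = 0} of A *)
Definition crd1 (w : vec3) : R := (w 0 - w 1) / Num.sqrt 2.
Definition crd2 (w : vec3) : R := (w 0 + w 1 - 2 * w 2) / Num.sqrt 6.

(* theta is a version of lambda |-> angle(eta lambda, c) on [0,1], i.e. the
   oriented angle of the vector eta lambda - c *)
Definition angle_version (eta : R -> vec3) (c : vec3) (theta : R -> R) : Prop :=
  forall l : R, 0 <= l <= 1 ->
    exists2 r : R, 0 < r &
      crd1 (fun i => eta l i - c i) = r * cos (theta l) /\
      crd2 (fun i => eta l i - c i) = r * sin (theta l).

Definition monotone01 (theta : R -> R) : Prop :=
  (forall x y : R, 0 <= x -> x <= y -> y <= 1 -> theta x <= theta y) \/
  (forall x y : R, 0 <= x -> x <= y -> y <= 1 -> theta y <= theta x).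

Definition locus_convex (chi : R -> vec3) (eta : R -> vec3) : Prop :=
  (forall l : R, 0 <= l <= 1 -> bdA (inT chi) (eta l)) /\
  forall c, relintA (inT chi) c ->
    exists theta : R -> R,
      {within `[0, 1]%classic, continuous theta} /\
      angle_version eta c theta /\
      monotone01 theta /\
      `|theta 0 - theta 1| <= 2 * pi.

Definition in_segment (x y z : vec3) : Prop :=
  exists2 t : R, 0 <= t <= 1 & forall i, z i = (1 - t) * x i + t * y i.

Definition locus_strictly_convex (chi : R -> vec3) (eta : R -> vec3) : Prop :=
  locus_convex chi eta /\
  forall a b l : R, 0 <= a <= 1 -> 0 <= b <= 1 -> 0 <= l <= 1 ->
    a <> b -> a <> l -> b <> l -> ~ in_segment (eta a) (eta b) (eta l).

Definition msupp (m : set R -> \bar R) : set R :=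
  [set x | forall e : R, 0 < e -> (0 < m (ball x e))%E].

(* cyclic intervals in [0,1]; ca / cb say whether the left / right end is
   closed *)
Definition cyc_itv (a b : R) (ca cb : bool) : set R :=
  if a <= b then
    [set x | (if ca then a <= x else a < x) /\ (if cb then x <= b else x < b)]
  else
    [set x | 0 <= x <= 1 /\
             ((if ca then a <= x else a < x) \/ (if cb then x <= b else x < b))].

Definition cyclic_interval (I : set R) : Prop :=
  exists a b : R, exists ca cb : bool,
    0 <= a <= 1 /\ 0 <= b <= 1 /\ I = cyc_itv a b ca cb.

Definition changes_sign_twice (m : set R -> \bar R) (u : R -> R) : Prop :=
  (0 < m [set x | (0 < u x)%R])%E /\ (0 < m [set x | (u x < 0)%R])%E /\
  exists I : set R,
    cyclic_interval I /\ I `<=` `[0, 1] /\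
    (I°) !=set0 /\ ((`[0, 1] `\` I)°) !=set0 /\
    (forall x, I x -> 0 <= u x) /\
    (forall x, (`[0, 1] `\` I) x -> u x <= 0).

Definition cmu (mt : {measure set R -> \bar R}) (eta : R -> vec3) (f : R -> R)
  : 'I_3 -> \bar R :=
  fun i => (\int[mt]_(x in `[0%R, 1%R]) (f x * eta x i)%:E)%E.

End defs.

(* Main.v *)
Require Import Defs.
From HB Require Import structures.
From mathcomp Require Import all_boot all_order all_algebra.
From mathcomp Require Import all_classical all_reals all_analysis.
From mathcomp Require Import ring lra.
Import Order.TTheory GRing.Theory Num.Theory.
Import numFieldNormedType.Exports.
Local Open Scope classical_set_scope.
Local Open Scope ring_scope.
Section G.
Variable R : realType.

Lemma ord3P (i : 'I_3) : i = 0 \/ i = 1 \/ i = 2%R.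
Proof.
case: i => [[|[|[|n]]] Hi]; [left|right;left|right;right|]; try (by apply/val_inj).
by [].
Qed.

Lemma sum3E (x : vec3 R) : sum3 x = x 0 + x 1 + x 2%R.
Proof.
rewrite /sum3 !big_ord_recr big_ord0 /= add0r.
congr (x _ + x _ + x _); exact/val_inj.
Qed.

Definition Dz (x y z : vec3 R) : R :=
  (x 0 * y 1 - x 1 * y 0) + (y 0 * z 1 - y 1 * z 0) + (z 0 * x 1 - z 1 * x 0).

Lemma DzC (x y z : vec3 R) : Dz x y z = Dz y z x.
Proof. rewrite /Dz; ring. Qed.
Lemma DzN (x y z : vec3 R) : Dz x y z = - Dz x z y.
Proof. rewrite /Dz; ring. Qed.

Lemma collinear_seg (x y z : vec3 R) : sum3 x = 1 -> sum3 y = 1 -> sum3 z = 1 ->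
  Dz x y z = 0 ->
  in_segment x y z \/ in_segment x z y \/ in_segment y z x.
Proof.
rewrite !sum3E => sx sy sz D0.
suff : (exists s, forall i, z i - x i = s * (y i - x i)) \/
               (forall i, y i = x i).
  case => [[s Hs]|Hy].
  - have [s01|[s1|s0]] : (0 <= s <= 1) \/ 1 < s \/ s < 0.
      case: (lerP 0 s) => s0; last by right; right.
      case: (lerP s 1) => s1; first by left; apply/andP; split.
      by right; left.
    + left; exists s => // i; have := Hs i; lra.
    + right; left; exists s^-1.
        by rewrite invr_ge0 (ltW (lt_trans ltr01 s1)) invf_le1 ?(ltW s1) ?(lt_trans ltr01 s1).
      move=> i; have := Hs i => H.
      have s0 : s != 0 by rewrite gt_eqF // (lt_trans ltr01 s1).
      have -> : y i = x i + s^-1 * (z i - x i) by rewrite H mulrA mulVf // mul1r; ring.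
      ring.
    + right; right; exists (1 - s)^-1.
        have hs : 0 < 1 - s by lra.
        rewrite invr_ge0 (ltW hs) /= invf_le1 //; lra.
      move=> i; have := Hs i => H.
      have hs : 1 - s != 0 by apply/eqP; lra.
      have -> : z i = x i + s * (y i - x i) by lra.
      field; exact: hs.
  - right; left; exists 0; first by rewrite lexx ler01.
    by move=> i; rewrite Hy; ring.
have D0' : (y 0 - x 0) * (z 1 - x 1) = (y 1 - x 1) * (z 0 - x 0).
  move: D0; rewrite /Dz => D0; apply/eqP; rewrite -subr_eq0; apply/eqP.
  rewrite -D0; ring.
have [u0|u0] := eqVneq (y 0 - x 0) 0.
  have [u1|u1] := eqVneq (y 1 - x 1) 0.
    right => i; case: (ord3P i) => [->|[->|->]]; lra.
  left; exists ((z 1 - x 1) / (y 1 - x 1)) => i.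
  have v0 : z 0 - x 0 = 0.
    move: D0'; rewrite u0 mul0r => /esym/eqP; rewrite mulf_eq0 (negbTE u1) /=.
    by move/eqP.
  case: (ord3P i) => [->|[->|->]].
  - by rewrite v0 u0 mulr0.
  - by field.
  - have -> : z 2%R - x 2%R = - (z 0 - x 0) - (z 1 - x 1) by lra.
    have -> : y 2%R - x 2%R = - (y 0 - x 0) - (y 1 - x 1) by lra.
    rewrite v0 u0; field; exact: u1.
left; exists ((z 0 - x 0) / (y 0 - x 0)) => i.
have v1 : z 1 - x 1 = (y 1 - x 1) * (z 0 - x 0) / (y 0 - x 0).
  by rewrite -D0'; field.
case: (ord3P i) => [->|[->|->]].
- by field.
- by rewrite v1; field.
- have -> : z 2%R - x 2%R = - (z 0 - x 0) - (z 1 - x 1) by lra.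
  have -> : y 2%R - x 2%R = - (y 0 - x 0) - (y 1 - x 1) by lra.
  rewrite v1; field; exact: u0.
Qed.

Lemma wcMr (A : set R) (f : R -> R) (c : R) : {within A, continuous f} ->
  {within A, continuous (fun t => f t * c)}.
Proof. by move=> cf t; apply: cvgMr_tmp; exact: cf. Qed.

Lemma wcD (A : set R) (f g : R -> R) : {within A, continuous f} ->
  {within A, continuous g} -> {within A, continuous (fun t => f t + g t)}.
Proof. by move=> cf cg t; apply: cvgD; [exact: cf|exact: cg]. Qed.

Lemma wcC (A : set R) (c : R) : {within A, continuous (fun _ : R => c)}.
Proof. by move=> t; exact: cvg_cst. Qed.

Lemma sgc (g : R -> R) c d : c <= d -> {within `[c, d], continuous g} ->
  (forall t, c <= t <= d -> g t != 0) -> 0 < g c * g d.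
Proof.
move=> cd cg nz; rewrite ltNge; apply/negP => H.
have gc : g c != 0 by apply: nz; rewrite lexx cd.
have gd : g d != 0 by apply: nz; rewrite lexx cd.
have : Num.min (g c) (g d) <= 0 <= Num.max (g c) (g d).
  rewrite ge_min le_max.
  have hc : g c < 0 \/ 0 < g c by apply/orP; rewrite -neq_lt.
  have hd : g d < 0 \/ 0 < g d by apply/orP; rewrite -neq_lt.
  case: hc => hc; case: hd => hd.
  - have : 0 < g c * g d by rewrite nmulr_rgt0.
    by rewrite ltNge H.
  - by rewrite (ltW hc) (ltW hd) orbT.
  - by rewrite (ltW hc) (ltW hd) orbT.
  - have : 0 < g c * g d by apply: mulr_gt0.
    by rewrite ltNge H.
move=> /(IVT cd cg) [t]; rewrite in_itv /= => /nz /eqP; done.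
Qed.

Variable eta : R -> vec3 R.
Hypothesis ceta : forall i, {within `[0, 1], continuous (fun t => eta t i)}.
Hypothesis HA : forall t, 0 <= t <= 1 -> sum3 (eta t) = 1.
Hypothesis Hseg : forall a b l : R, 0 <= a <= 1 -> 0 <= b <= 1 -> 0 <= l <= 1 ->
    a <> b -> a <> l -> b <> l -> ~ in_segment (eta a) (eta b) (eta l).

Definition O i j k := Dz (eta i) (eta j) (eta k).

Lemma Onz a b l : 0 <= a <= 1 -> 0 <= b <= 1 -> 0 <= l <= 1 ->
    a <> b -> a <> l -> b <> l -> O a b l != 0.
Proof.
move=> ha hb hl ab al bl; apply/eqP => /collinear_seg.
move=> /(_ (HA _ ha) (HA _ hb) (HA _ hl)) [|[]].
- exact: Hseg.
- by apply: Hseg => // /esym.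
- by apply: Hseg => // /esym.
Qed.

Lemma contDz x y c d : 0 <= c -> d <= 1 ->
  {within `[c, d], continuous (fun t => Dz x y (eta t))}.
Proof.
move=> c0 d1.
have -> : (fun t => Dz x y (eta t)) = (fun t =>
   (x 0 * y 1 - x 1 * y 0) + (eta t 1 * (y 0 - x 0) + eta t 0 * (x 1 - y 1))).
  by apply: funext => t; rewrite /Dz; ring.
have sub : `[c, d] `<=` `[0, 1]%classic.
  move=> t /=; rewrite !in_itv /= => /andP[ct td]; apply/andP; split.
  exact: le_trans ct. exact: le_trans d1.
apply: wcD; first exact: wcC.
by apply: wcD; apply: wcMr; apply: continuous_subspaceW sub _; exact: ceta.
Qed.

Lemma ptrans (A B C : R) : 0 < A * B -> 0 < B * C -> 0 < A * C.
Proof.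
move=> h1 h2.
have h3 : 0 < (A * C) * (B * B).
  have -> : A * C * (B * B) = (A * B) * (B * C) by ring.
  exact: mulr_gt0.
have hB : 0 < B * B.
  have hB : B != 0 by apply: contraTneq h1 => ->; rewrite mulr0 ltxx.
  by rewrite -expr2 exprn_even_gt0 //=.
by rewrite -(pmulr_lgt0 _ hB).
Qed.

Lemma s3aux c d : 0 < c -> c <= d -> d < 1 -> 0 < O 1 0 c * O 1 0 d.
Proof.
move=> c0 cd d1; apply: (@sgc (fun t => O 1 0 t)) => //.
  by apply: contDz => //; [exact: ltW|exact: ltW].
move=> t /andP[ct td]; apply: Onz; try (move=> h; lra).
- by rewrite ler01 lexx.
- by rewrite lexx ler01.
- apply/andP; split; lra.
Qed.

Lemma s3 c d : 0 < c < 1 -> 0 < d < 1 -> 0 < O 1 0 c * O 1 0 d.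
Proof.
move=> /andP[c0 c1] /andP[d0 d1].
case: (lerP c d) => cd; first exact: s3aux.
by rewrite mulrC; apply: s3aux => //; exact: ltW.
Qed.

Definition O0 := O 0 (2^-1) 1.

Lemma Opos i j k : 0 <= i -> i < j -> j < k -> k <= 1 -> 0 < O i j k * O0.
Proof.
move=> i0 ij jk k1.
have s1 : 0 < O i j k * O i j 1.
  apply: (@sgc (fun t => O i j t)) => //.
    by apply: contDz => //; lra.
  move=> t /andP[kt t1]; apply: Onz; try (move=> h; lra); apply/andP; split; lra.
have s2 : 0 < O i j 1 * O 0 j 1.
  have -> : O i j 1 = O j 1 i by rewrite /O DzC.
  have -> : O 0 j 1 = O j 1 0 by rewrite /O DzC.
  rewrite mulrC; apply: (@sgc (fun t => O j 1 t)) => //.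
    by apply: contDz => //; lra.
  move=> t /andP[t0 ti]; apply: Onz; try (move=> h; lra); apply/andP; split; lra.
have s3' : 0 < O 0 j 1 * O0.
  have -> : O 0 j 1 = O 1 0 j by rewrite /O DzC DzC.
  have -> : O0 = O 1 0 (2^-1) by rewrite /O0 /O DzC DzC.
  apply: s3; apply/andP; split; lra.
exact: (ptrans _ _ _ (ptrans _ _ _ s1 s2) s3').
Qed.

Lemma sep_in a b l : 0 <= a -> a < l -> l < b -> b <= 1 -> 0 < - O a b l * O0.
Proof.
move=> a0 al lb b1; rewrite /O DzN opprK; exact: Opos.
Qed.

Lemma sep_lt a b l : 0 <= l -> l < a -> a < b -> b <= 1 -> 0 < O a b l * O0.
Proof.
move=> l0 la ab b1; have -> : O a b l = O l a b by rewrite /O DzC DzC.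
exact: Opos.
Qed.

Lemma sep_gt a b l : 0 <= a -> a < b -> b < l -> l <= 1 -> 0 < O a b l * O0.
Proof. exact: Opos. Qed.
End G.

Section M.
Variable R : realType.
Variable mut : {measure set R -> \bar R}.
Local Open Scope ereal_scope.

Lemma intD0 (D : set R) (mD : measurable D) (F G : R -> R) :
  mut.-integrable D (EFin \o F) -> mut.-integrable D (EFin \o G) ->
  \int[mut]_(x in D) (F x)%:E = 0 -> \int[mut]_(x in D) (G x)%:E = 0 ->
  mut.-integrable D (EFin \o (fun x => F x + G x)%R) /\
  \int[mut]_(x in D) (F x + G x)%:E = 0.
Proof.
move=> iF iG F0 G0; split.
  have -> : EFin \o (fun x => F x + G x)%R = (EFin \o F) \+ (EFin \o G).
    by apply: funext => x /=; rewrite EFinD.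
  exact: integrableD.
under eq_integral do rewrite EFinD.
by have := integralD_EFin mD iF iG => /= ->; rewrite F0 G0 adde0.
Qed.

Lemma intZ0 (D : set R) (mD : measurable D) (F : R -> R) (c : R) :
  mut.-integrable D (EFin \o F) -> \int[mut]_(x in D) (F x)%:E = 0 ->
  mut.-integrable D (EFin \o (fun x => c * F x)%R) /\
  \int[mut]_(x in D) (c * F x)%:E = 0.
Proof.
move=> iF F0; split.
  have -> : EFin \o (fun x => c * F x)%R = (fun x => c%:E * (EFin \o F) x).
    by apply: funext => x /=; rewrite EFinM.
  exact: integrableZl.
under eq_integral do rewrite EFinM.
by rewrite integralZl // F0 mule0.
Qed.

Lemma ge0_int0 (D : set R) (mD : measurable D) (F : R -> R) :
  mut.-integrable D (EFin \o F) -> (forall x, D x -> (0 <= F x)%R) ->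
  \int[mut]_(x in D) (F x)%:E = 0 ->
  exists N, [/\ measurable N, mut N = 0 & forall x, D x -> F x <> 0%R -> N x].
Proof.
move=> iF F0 I0.
have mF := measurable_int _ iF.
have : \int[mut]_(x in D) `|(EFin \o F) x| = 0.
  rewrite -I0; apply: eq_integral => x /[1!inE] Dx.
  by change (`|(F x)%:E| = (F x)%:E); rewrite gee0_abs // lee_fin F0.
move=> /(ae_eq_integral_abs _ mD mF) [N [mN N0 sub]].
exists N; split => // x Dx Fx; apply: sub => /= h.
by apply: Fx; have := h Dx => -[].
Qed.


Lemma aff0 (D : set R) (mD : measurable D) (F : R -> R) (e : R -> vec3 R)
    (c0 c1 c2 c : R) :
  mut.-integrable D (EFin \o F) ->
  (forall i, mut.-integrable D (EFin \o (fun x => F x * e x i)%R)) ->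
  \int[mut]_(x in D) (F x)%:E = 0 ->
  (forall i, \int[mut]_(x in D) (F x * e x i)%:E = 0) ->
  mut.-integrable D
    (EFin \o (fun x => F x * (c0 * e x 0 + c1 * e x 1 + c2 * e x 2%R + c))%R) /\
  \int[mut]_(x in D) (F x * (c0 * e x 0 + c1 * e x 1 + c2 * e x 2%R + c))%:E = 0.
Proof.
move=> iF ie F0 e0.
have E : (fun x => F x * (c0 * e x 0 + c1 * e x 1 + c2 * e x 2%R + c))%R =
  (fun x => ((c0 * (F x * e x 0) + c1 * (F x * e x 1)) + c2 * (F x * e x 2%R))
            + c * F x)%R.
  by apply: funext => x; ring.
have [i0 I0] := intZ0 _ mD _ c0 (ie 0%R) (e0 0%R).
have [i1 I1] := intZ0 _ mD _ c1 (ie 1%R) (e0 1%R).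
have [i2 I2] := intZ0 _ mD _ c2 (ie 2%R) (e0 2%R).
have [i3 I3] := intZ0 _ mD _ c iF F0.
have [i01 I01] := intD0 _ mD _ _ i0 i1 I0 I1.
have [i012 I012] := intD0 _ mD _ _ i01 i2 I01 I2.
case: (intD0 _ mD _ _ i012 i3 I012 I3) => i I; split; first by rewrite E.
rewrite -I; apply: eq_integral => x _; congr (_%:E); ring.
Qed.

Lemma null3 (S N1 N2 N3 : set R) : measurable S -> measurable N1 ->
  measurable N2 -> measurable N3 -> mut N1 = 0 -> mut N2 = 0 -> mut N3 = 0 ->
  S `<=` N1 `|` N2 `|` N3 -> mut S = 0.
Proof.
move=> mS m1 m2 m3 z1 z2 z3 sub.
apply: (subset_measure0 mS _ sub).
  by apply: measurableU => //; exact: measurableU.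
transitivity (mut (N1 `|` N2)); first by apply: measureU0 => //; exact: measurableU.
transitivity (mut N1); first exact: measureU0.
exact: z1.
Qed.

Lemma meas_gt (u : R -> R) : measurable_fun setT u ->
  measurable [set x | (0 < u x)%R] /\ measurable [set x | (u x < 0)%R].
Proof.
move=> mu_; split.
  have := mu_ measurableT _ (measurable_itv `]0%R, +oo[); rewrite setTI.
  congr measurable; apply/seteqP; split => x /=; rewrite in_itv /= andbT //.
have := mu_ measurableT _ (measurable_itv `]-oo, 0%R[); rewrite setTI.
congr measurable; apply/seteqP; split => x /=; rewrite in_itv /= //.
Qed.


Lemma sq3pos (d : vec3 R) : (exists i, d i != 0%R) ->
  (0 < d 0 * d 0 + d 1 * d 1 + d 2%R * d 2%R)%R.
Proof.
case=> i di.
have s0 : (0 <= d 0 * d 0)%R by rewrite -expr2 sqr_ge0.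
have s1 : (0 <= d 1 * d 1)%R by rewrite -expr2 sqr_ge0.
have s2 : (0 <= d 2%R * d 2%R)%R by rewrite -expr2 sqr_ge0.
have : (0 < d i * d i)%R by rewrite -expr2 exprn_even_gt0.
case: (ord3P i) => [->|[->|->]]; lra.
Qed.

Lemma core (eta : R -> vec3 R) (u W : R -> R) (a b cW0 cW1 cWc : R) :
  (0 <= a)%R -> (a < b)%R -> (b <= 1)%R ->
  measurable_fun setT u ->
  mut (~` `[0%R, 1%R]%classic) = 0 ->
  mut.-integrable `[0%R, 1%R]%classic (EFin \o u) ->
  (forall i, mut.-integrable `[0%R, 1%R]%classic (EFin \o (fun x => u x * eta x i)%R)) ->
  \int[mut]_(x in `[0%R, 1%R]%classic) (u x)%:E = 0 ->
  (forall i, \int[mut]_(x in `[0%R, 1%R]%classic) (u x * eta x i)%:E = 0) ->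
  (forall x, W x = cW0 * eta x 0 + cW1 * eta x 1 + cWc)%R ->
  W a = 0%R -> W b = 0%R ->
  (forall x, a < x < b -> 0 < W x)%R ->
  (forall x, 0 <= x <= 1 -> (x < a \/ b < x) -> W x < 0)%R ->
  (exists i, eta a i != eta b i) ->
  (forall x, a < x < b -> 0 <= u x)%R ->
  (forall x, 0 <= x <= 1 -> (x < a \/ b < x) -> u x <= 0)%R ->
  0 < mut [set x | (0 < u x)%R] -> 0 < mut [set x | (u x < 0)%R] -> False.
Proof.
move=> a0 ab b1 mu_ nD iu iue Iu Iue HW Wa Wb Win Wout etaab uin uout Pp Pn.
pose D : set R := `[0%R, 1%R]%classic.
have mD : measurable D by exact: measurable_itv.
have mnD : measurable (~` D) by exact: measurableC.
have [mSp mSn] := meas_gt _ mu_.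
pose k x := (u x * W x)%R.
have [ik Ik] : mut.-integrable D (EFin \o k) /\ \int[mut]_(x in D) (k x)%:E = 0.
  have E : k = (fun x => u x * (cW0 * eta x 0 + cW1 * eta x 1 + 0 * eta x 2%R + cWc))%R.
    by apply: funext => x; rewrite /k HW; ring.
  rewrite E; exact: aff0.
have DP x : D x -> (0 <= x <= 1)%R by rewrite /D /= in_itv.
have kge0 : forall x, D x -> (0 <= k x)%R.
  move=> x /DP x01; rewrite /k.
  case: (ltrgtP x a) => [xa|ax|->]; last by rewrite Wa mulr0.
    by rewrite mulr_le0 // ?uout ?(ltW (Wout _ _ _)) //; left.
  case: (ltrgtP x b) => [xb|bx|->]; last by rewrite Wb mulr0.
    by rewrite mulr_ge0 // ?uin ?(ltW (Win _ _)) // ax xb.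
  by rewrite mulr_le0 // ?uout ?(ltW (Wout _ _ _)) //; right.
have [N1 [mN1 N10 HN1]] := ge0_int0 _ mD _ ik kge0 Ik.
have kz x : D x -> ~ N1 x -> k x = 0%R.
  by move=> Dx nN; apply: contrapT => kx; apply: nN; exact: HN1.
have Wz x : D x -> W x = 0%R -> x = a \/ x = b.
  move=> /DP x01 Wx.
  case: (ltrgtP x a) => [xa|ax|->]; last by left.
    by have := Wout _ x01 (or_introl xa); rewrite Wx ltxx.
  case: (ltrgtP x b) => [xb|bx|->]; last by right.
    by have := Win x; rewrite ax xb Wx ltxx => /(_ isT).
  by have := Wout _ x01 (or_intror bx); rewrite Wx ltxx.
have ab_of x : D x -> ~ N1 x -> u x <> 0%R -> x = a \/ x = b.
  move=> Dx nN ux; apply: Wz => //.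
  by have /eqP := kz x Dx nN; rewrite /k mulf_eq0 => /orP[/eqP|/eqP].
have [p [Dp nN1p up]] : exists p, [/\ D p, ~ N1 p & (0 < u p)%R].
  apply: contrapT => H.
  have : mut [set x | (0 < u x)%R] = 0.
    apply: (null3 _ _ _ _ mSp mN1 mnD measurable0 N10 nD (measure0 _)).
    move=> x /= ux; case: (pselect (D x)) => Dx; last by left; right.
    case: (pselect (N1 x)) => N1x; first by left; left.
    by exfalso; apply: H; exists x.
  by move=> h; move: Pp; rewrite h ltxx.
have [q [Dq nN1q uq]] : exists q, [/\ D q, ~ N1 q & (u q < 0)%R].
  apply: contrapT => H.
  have : mut [set x | (u x < 0)%R] = 0.
    apply: (null3 _ _ _ _ mSn mN1 mnD measurable0 N10 nD (measure0 _)).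
    move=> x /= ux; case: (pselect (D x)) => Dx; last by left; right.
    case: (pselect (N1 x)) => N1x; first by left; left.
    by exfalso; apply: H; exists x.
  by move=> h; move: Pn; rewrite h ltxx.
have hp : p = a \/ p = b.
  by apply: (ab_of p Dp nN1p) => h; move: up; rewrite h ltxx.
have hq : q = a \/ q = b.
  by apply: (ab_of q Dq nN1q) => h; move: uq; rewrite h ltxx.
have pq : p <> q by move=> h; move: up; rewrite h => /(lt_trans uq); rewrite ltxx.
have xpq x : x = a \/ x = b -> x = p \/ x = q.
  move: pq; case: hp => ->; case: hq => -> => hpq; case => ->; move: hpq;
    (by left) || (by right) || (by move=> h; exfalso; apply: h).
pose d : vec3 R := fun i => (eta p i - eta q i)%R.
pose c := (- (d 0 * eta q 0 + d 1 * eta q 1 + d 2%R * eta q 2%R))%R.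
pose k2 x := (u x * (d 0 * eta x 0 + d 1 * eta x 1 + d 2%R * eta x 2%R + c))%R.
have [ik2 Ik2] : mut.-integrable D (EFin \o k2) /\ \int[mut]_(x in D) (k2 x)%:E = 0.
  exact: aff0.
pose D' := D `\` N1.
have mD' : measurable D' by exact: measurableD.
have ik2' : mut.-integrable D' (EFin \o k2).
  by apply: (integrableS mD mD') => // x [].
have Ik2' : \int[mut]_(x in D') (k2 x)%:E = 0.
  by rewrite -negligible_integral.
have Lp : (d 0 * eta p 0 + d 1 * eta p 1 + d 2%R * eta p 2%R + c =
           d 0 * d 0 + d 1 * d 1 + d 2%R * d 2%R)%R by rewrite /c /d; ring.
have Lq : (d 0 * eta q 0 + d 1 * eta q 1 + d 2%R * eta q 2%R + c = 0)%R
  by rewrite /c /d; ring.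
have dpos : (0 < d 0 * d 0 + d 1 * d 1 + d 2%R * d 2%R)%R.
  apply: sq3pos; case: etaab => i hi; exists i; rewrite /d.
  move: pq hi; case: hp => ->; case: hq => -> //; rewrite ?subr_eq0 // => _.
  by rewrite eq_sym.
have k2ge0 x : D' x -> (0 <= k2 x)%R.
  case=> Dx nN1x; rewrite /k2.
  have [ux0|ux0] := eqVneq (u x) 0%R; first by rewrite ux0 mul0r.
  case: (xpq x (ab_of x Dx nN1x (fun h => (negP ux0) (introT eqP h)))) => ->.
    by rewrite Lp; apply: mulr_ge0 => //; [exact: ltW|exact: ltW].
  by rewrite Lq mulr0.
have [N2 [mN2 N20 HN2]] := ge0_int0 _ mD' _ ik2' k2ge0 Ik2'.
have : mut [set x | (0 < u x)%R] = 0.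
  apply: (null3 _ _ _ _ mSp mN1 mN2 mnD N10 N20 nD).
  move=> x /= ux; case: (pselect (D x)) => Dx; last by right.
  case: (pselect (N1 x)) => N1x; first by left; left.
  case: (pselect (N2 x)) => N2x; first by left; right.
  exfalso; apply: N2x; apply: HN2; first by split.
  have ux0 : u x <> 0%R by move=> h; move: ux; rewrite h ltxx.
  case: (xpq x (ab_of x Dx N1x ux0)) => hx; rewrite hx in ux *.
    by rewrite /k2 Lp; apply/eqP; rewrite gt_eqF // mulr_gt0.
  by have := lt_trans uq ux; rewrite ltxx.
by move=> h; move: Pp; rewrite h ltxx.
Qed.

End M.

Section P.
Variable R : realType.

Lemma HA_of (chi eta : R -> vec3 R) :
  (forall t, 0 < t -> forall i, 0 <= chi t i) ->
  (forall t, 0 < t < 1 -> exists i, chi t i != 0) ->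
  (forall t, 0 < t < 1 -> forall i, eta t i = chi t i / sum3 (chi t)) ->
  (forall i, {within `[0, 1], continuous (fun t => eta t i)}) ->
  forall t, 0 <= t <= 1 -> sum3 (eta t) = 1.
Proof.
move=> chi0 chinz etadef etac.
have inner t : 0 < t < 1 -> sum3 (eta t) = 1.
  move=> t01; have /andP[t0 t1] := t01.
  have [i hi] := chinz t t01.
  have c0 := chi0 t t0 0; have c1 := chi0 t t0 1; have c2 := chi0 t t0 2%R.
  have cp : 0 < chi t i by rewrite lt_neqAle eq_sym hi chi0.
  have sp : 0 < sum3 (chi t).
    by rewrite sum3E; move: cp; case: (ord3P i) => [->|[->|->]]; lra.
  rewrite sum3E !etadef // -!mulrDl -sum3E divff //.
  exact: lt0r_neq0.
pose phi t := eta t 0 + eta t 1 + eta t 2%R.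
have cphi : {within `[0, 1], continuous phi}.
  by apply: wcD; [apply: wcD|]; exact: etac.
have [_ c0 c1] := (continuous_within_itvP _ ltr01).1 cphi.
move=> t /andP[t0 t1].
case: (ltrgtP t 0) => [|tp|->]; first by rewrite ltNge t0.
  case: (ltrgtP t 1) => [tl||->]; first by apply: inner; rewrite tp tl.
    by rewrite ltNge t1.
  rewrite sum3E -/(phi 1); apply: (cvg_unique (@Rhausdorff R) c1).
  apply: cvg_near_cst; near=> s; rewrite /phi -sum3E; apply: inner.
  apply/andP; split; near: s; [exact: nbhs_left_gt| exact: nbhs_left_lt].
rewrite sum3E -/(phi 0); apply: (cvg_unique (@Rhausdorff R) c0).
apply: cvg_near_cst; near=> s; rewrite /phi -sum3E; apply: inner.
apply/andP; split; near: s; [exact: nbhs_right_gt| exact: nbhs_right_lt].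
Unshelve. all: by end_near.
Qed.


Lemma chi_out (chi : R -> vec3 R) :
  closure [set t | 0 < t /\ exists i, chi t i != 0] = `[0, 1]%classic ->
  forall t, 1 < t -> forall i, chi t i = 0.
Proof.
move=> supp t t1 i; apply/eqP; apply: contraT => hi.
have : closure [set t | 0 < t /\ exists i, chi t i != 0] t.
  apply: subset_closure; split; last by exists i.
  exact: lt_trans ltr01 t1.
rewrite supp /= in_itv /= => /andP[_]; rewrite leNgt t1.
done.
Qed.

Lemma mut_out (chi : R -> vec3 R) (mu : {finite_measure set R -> \bar R})
  (mut : {measure set R -> \bar R}) :
  closure [set t | 0 < t /\ exists i, chi t i != 0] = `[0, 1]%classic ->
  (forall A, measurable A ->
     mut A = (\int[mu]_(t in A `&` @Lam R) (sum3 (chi t))%:E)%E) ->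
  mut (~` `[0, 1]%classic) = 0%E.
Proof.
move=> supp mutdef; rewrite mutdef; last first.
  by apply: measurableC; exact: measurable_itv.
apply: integral0_eq => t [/= nt t0].
have t1 : 1 < t.
  move: nt; rewrite in_itv /= (ltW t0) /= => /negP; rewrite -ltNge.
  by [].
by rewrite sum3E !(chi_out _ supp _ t1) !add0r.
Qed.

Lemma eta_mb (eta : R -> vec3 R) :
  (forall i, {within `[0, 1], continuous (fun t => eta t i)}) ->
  forall i, measurable_fun (`[0, 1]%classic : set R) (fun t => eta t i) /\
            [bounded eta x i | x in (`[0, 1]%classic : set R)].
Proof.
move=> etac i; split.
  exact: (measurable_realfun.subspace_continuous_measurable_fun (measurable_itv _) (etac i)).
have [c1 _ h1] := EVT_max ler01 (etac i).
have [c2 _ h2] := EVT_min ler01 (etac i).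
exists (`|eta c1 i| + `|eta c2 i|); split; first exact: num_real.
move=> M BM x Dx.
have x01 : x \in `[0, 1] by exact: Dx.
have := h1 _ x01; have := h2 _ x01.
have n1 := ler_norm (eta c1 i); have n2 := ler_norm (- eta c2 i).
rewrite normrN in n2 => a1 a2.
apply: le_trans (ltW BM); rewrite ler_norml; have p1 := normr_ge0 (eta c1 i); have p2 := normr_ge0 (eta c2 i); apply/andP; split; lra.
Qed.


Lemma prep (mut : {measure set R -> \bar R}) (eta : R -> vec3 R) (f g : R -> R) :
  mut (~` `[0%R, 1%R]%classic) = 0%E ->
  (forall i, {within `[0, 1], continuous (fun t => eta t i)}) ->
  mut.-integrable setT (EFin \o f) ->
  mut.-integrable setT (EFin \o g) ->
  (\int[mut]_x (f x)%:E)%E = 1%E ->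
  (\int[mut]_x (g x)%:E)%E = 1%E ->
  cmu mut eta f = cmu mut eta g ->
  [/\ mut.-integrable (`[0%R, 1%R]%classic : set R) (EFin \o (fun x => f x - g x)),
      (\int[mut]_(x in (`[0%R, 1%R]%classic : set R)) (f x - g x)%:E)%E = 0%E,
      (forall i, mut.-integrable (`[0%R, 1%R]%classic : set R)
          (EFin \o (fun x => (f x - g x) * eta x i))) &
      (forall i, (\int[mut]_(x in (`[0%R, 1%R]%classic : set R))
          ((f x - g x) * eta x i)%:E)%E = 0%E)].
Proof.
move=> nD etac iF iG IF IG Heq.
pose D : set R := `[0%R, 1%R]%classic.
have mD : measurable D by exact: measurable_itv.
have mnD : measurable (~` D) by exact: measurableC.
have iFD : mut.-integrable D (EFin \o f) by exact: (integrableS measurableT mD).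
have iGD : mut.-integrable D (EFin \o g) by exact: (integrableS measurableT mD).
have sD : setT `\` ~` D = D by rewrite setTD setCK.
have IFD : (\int[mut]_(x in D) (f x)%:E)%E = 1%E.
  by rewrite -IF (negligible_integral mnD measurableT iF nD) sD.
have IGD : (\int[mut]_(x in D) (g x)%:E)%E = 1%E.
  by rewrite -IG (negligible_integral mnD measurableT iG nD) sD.
have ifg : forall (F G : R -> R), mut.-integrable D (EFin \o F) ->
    mut.-integrable D (EFin \o G) ->
    mut.-integrable D (EFin \o (fun x => F x - G x)).
  move=> F G iF' iG'.
  have -> : EFin \o (fun x => F x - G x) = ((EFin \o F) \- (EFin \o G))%E.
    by apply: funext => x /=; rewrite EFinB.
  exact: integrableB.
have Ifg : forall (F G : R -> R), mut.-integrable D (EFin \o F) ->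
    mut.-integrable D (EFin \o G) ->
    (\int[mut]_(x in D) (F x)%:E)%E = (\int[mut]_(x in D) (G x)%:E)%E ->
    (\int[mut]_(x in D) (F x - G x)%:E)%E = 0%E.
  move=> F G iF' iG' e.
  under eq_integral do rewrite EFinB.
  rewrite integralB_EFin // e subee //.
  rewrite -e; exact: integrable_fin_num.
have ie i : mut.-integrable D (EFin \o (fun x => f x * eta x i)) /\
            mut.-integrable D (EFin \o (fun x => g x * eta x i)).
  have [m bd] := eta_mb _ etac i.
  split.
    have := integrableMl mD iFD m bd.
    congr (_.-integrable _ _); apply: funext => x /=; by rewrite EFinM.
  have := integrableMl mD iGD m bd.
  congr (_.-integrable _ _); apply: funext => x /=; by rewrite EFinM.
split.
- exact: ifg.
- by apply: Ifg => //; rewrite IFD IGD.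
- move=> i; have [i1 i2] := ie i.
  have -> : (fun x => (f x - g x) * eta x i) =
            (fun x => f x * eta x i - g x * eta x i) by apply: funext => x; ring.
  exact: ifg.
- move=> i; have [i1 i2] := ie i.
  have -> : (fun x => ((f x - g x) * eta x i)%:E) =
            (fun x => (f x * eta x i - g x * eta x i)%:E).
    by apply: funext => x; congr (_%:E); ring.
  apply: Ifg => //.
  by have := congr1 (fun F => F i) Heq.
Qed.


Lemma cyc_split (h : R -> R) (I : set R) :
  cyclic_interval I -> (I°) !=set0 ->
  (forall x, I x -> 0 <= h x) ->
  (forall x, (`[0, 1]%classic `\` I) x -> h x <= 0) ->
  exists a b e : R, [/\ 0 <= a /\ a < b /\ b <= 1, (e = 1 \/ e = -1),
    (forall x, a < x < b -> 0 <= e * h x) &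
    (forall x, 0 <= x <= 1 -> (x < a \/ b < x) -> e * h x <= 0)].
Proof.
move=> [a [b [ca [cb [/andP[a0 a1] [/andP[b0 b1] ->]]]]]] [x Ix] hI hO.
move: Ix hI hO; rewrite /cyc_itv; case: ifP => ab Ix hI hO.
  have Ile y : (if ca then a <= y else a < y) /\ (if cb then y <= b else y < b) ->
      a <= y <= b.
    move=> [u v]; apply/andP; split.
      by destruct ca => //; exact: ltW.
    by destruct cb => //; exact: ltW.
  have [e e0 sub] := (nbhs_ballP _ _).1 Ix.
  have bx : ball x e (x + e / 2).
    rewrite -ball_normE /ball_ /= opprD addrA subrr add0r normrN.
    by rewrite ger0_norm ?divr_ge0 ?(ltW e0) // ltr_pdivrMr // ltr_pMr // ltr1n.
  have h1 := Ile _ (sub _ (ballxx _ e0)); have h2 := Ile _ (sub _ bx).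
  have lab : a < b.
    move: h1 h2 => /andP[h1 _] /andP[_ h2].
    have : 0 < e / 2 by rewrite divr_gt0.
    lra.
  exists a, b, 1; split => //.
  - by left.
  - move=> y /andP[ay yb]; rewrite mul1r; apply: hI; split.
      by destruct ca => //; exact: ltW.
    by destruct cb => //; exact: ltW.
  - move=> y y01 hy; rewrite mul1r; apply: hO; split.
      by rewrite /= in_itv.
    move=> /Ile /andP[u v]; case: hy => hy; lra.
have lab : b < a by rewrite ltNge ab.
exists b, a, (-1); split => //.
- by right.
- move=> y /andP[by_ ya]; rewrite mulN1r oppr_ge0; apply: hO; split.
    by rewrite /= in_itv /=; apply/andP; split; lra.
  move=> [_ [u|v]].
    by destruct ca; lra.
  by destruct cb; lra.
- move=> y y01 hy; rewrite mulN1r oppr_le0; apply: hI; split => //.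
  case: hy => hy; [right|left].
    by destruct cb => //; exact: ltW.
  by destruct ca => //; exact: ltW.
Qed.

End P.

Theorem lemma4 (R : realType) (chi : R -> vec3 R) (eta : R -> vec3 R)
  (mu : {finite_measure set R -> \bar R})
  (mut : {measure set R -> \bar R}) (f g : R -> R) :
  (* chi : Lambda -> R^3_+ continuous, bounded *)
  (forall t, 0 < t -> forall i, 0 <= chi t i) ->
  (forall i, {within @Lam R, continuous (fun t => chi t i)}) ->
  (exists M : R, forall t, 0 < t -> forall i, chi t i <= M) ->
  (* supp chi = [0,1], chi <> 0 on (0,1) *)
  closure [set t | 0 < t /\ exists i, chi t i != 0] = `[0, 1]%classic ->
  (forall t, 0 < t < 1 -> exists i, chi t i != 0) ->
  (* eta = chi / <1,chi> on (0,1), continuously extended to [0,1] *)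
  (forall t, 0 < t < 1 -> forall i, eta t i = chi t i / sum3 (chi t)) ->
  (forall i, {within `[0, 1]%classic, continuous (fun t => eta t i)}) ->
  (* P has nonempty interior *)
  has_interior3 (inP chi) ->
  (* mu is a finite measure on Lambda, tilde mu = <chi,1> mu *)
  mu (~` @Lam R) = 0%E ->
  (forall A, measurable A ->
     mut A = (\int[mu]_(t in A `&` @Lam R) (sum3 (chi t))%:E)%E) ->
  mut (@Lam R) = 1%E ->
  msupp mut = `[0, 1]%classic ->
  (* strict convexity of the spectral locus *)
  locus_strictly_convex chi eta ->
  mut.-integrable setT (EFin \o f) ->
  mut.-integrable setT (EFin \o g) ->
  (\int[mut]_x (f x)%:E)%E = 1%E ->
  (\int[mut]_x (g x)%:E)%E = 1%E ->
  changes_sign_twice mut (f \- g) ->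
  cmu mut eta f <> cmu mut eta g.
Proof.
move=> chi0 chic chiM supp chinz etadef etac intP mu0 mutdef mutLam msupp
  [_ Hseg] iF iG IF IG [Pp [Pn [I [cycI [IsubD [Iint [_ [hI hO]]]]]]]] Heq.
have HA := HA_of _ chi eta chi0 chinz etadef etac.
have nD := mut_out _ chi mu mut supp mutdef.
have [ih Ih ihe Ihe] := prep _ mut eta f g nD etac iF iG IF IG Heq.
have [a [b [e [[a0 [ab b1]] he uin uout]]]] :=
  cyc_split _ (fun x => f x - g x) I cycI Iint hI hO.
pose D : set R := `[0%R, 1%R]%classic.
have mD : measurable D by exact: measurable_itv.
pose u x := e * (f x - g x).
have [iu Iu] := intZ0 _ mut D mD _ e ih Ih.
have iue i : mut.-integrable D (EFin \o (fun x => u x * eta x i)).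
  have [h _] := intZ0 _ mut D mD _ e (ihe i) (Ihe i).
  by move: h; congr (_.-integrable _ _); apply: funext => x /=; rewrite /u mulrA.
have Iue i : (\int[mut]_(x in D) (u x * eta x i)%:E = 0)%E.
  have [_ h] := intZ0 _ mut D mD _ e (ihe i) (Ihe i).
  by rewrite -h; apply: eq_integral => x _; rewrite /u mulrA.
have mu_ : measurable_fun setT u.
  apply: measurable_realfun.measurable_funM; first exact: measurable_cst.
  apply: measurable_realfun.measurable_funB.
    by apply/measurable_realfun.measurable_EFinP; exact: (measurable_int _ iF).
  by apply/measurable_realfun.measurable_EFinP; exact: (measurable_int _ iG).
have [Pp' Pn'] : (0 < mut [set x | (0 < u x)%R])%E /\ (0 < mut [set x | (u x < 0)%R])%E.
  rewrite /u; case: he => ->.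
    by split; [move: Pp | move: Pn]; congr (_ < mut _)%E; apply/seteqP;
      split => x /=; rewrite mul1r.
  by split; [move: Pn | move: Pp]; congr (_ < mut _)%E; apply/seteqP;
    split => x /=; rewrite mulN1r ?oppr_gt0 ?oppr_lt0.
pose K := eta a 0 * eta b 1 - eta a 1 * eta b 0.
pose W x := - O _ eta a b x * O0 _ eta.
have HW x : W x = (- O0 _ eta * (eta a 1 - eta b 1)) * eta x 0 +
                  (- O0 _ eta * (eta b 0 - eta a 0)) * eta x 1 + (- O0 _ eta * K).
  by rewrite /W /O /Dz /K; ring.
have Wa : W a = 0 by rewrite /W /O /Dz; ring.
have Wb : W b = 0 by rewrite /W /O /Dz; ring.
have Win x : a < x < b -> 0 < W x.
  move=> /andP[ax xb]; exact: (sep_in _ eta etac HA Hseg).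
have Wout x : 0 <= x <= 1 -> (x < a \/ b < x) -> W x < 0.
  move=> /andP[x0 x1] [xa|bx]; rewrite /W mulNr oppr_lt0.
    exact: (sep_lt _ eta etac HA Hseg).
  exact: (sep_gt _ eta etac HA Hseg).
have etaab : exists i, eta a i != eta b i.
  apply: contrapT => H.
  have e0 : eta a 0 = eta b 0 by apply: contrapT => h; apply: H; exists 0; apply/eqP.
  have e1 : eta a 1 = eta b 1 by apply: contrapT => h; apply: H; exists 1; apply/eqP.
  have hz : O _ eta a b ((a + b) / 2) = 0 by rewrite /O /Dz e0 e1; ring.
  have : a < (a + b) / 2 < b by apply/andP; split; lra.
  by move/Win; rewrite /W hz oppr0 mul0r ltxx.
exact: (core _ mut eta u W a b _ _ _ a0 ab b1 mu_ nD iu iue Iu Iue HW Wa Wb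
  Win Wout etaab uin uout Pp' Pn').
Qed.
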